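(* Let $G$ be a connected graph on $n$ vertices with maximum degree $\Delta\geq 2$. Then \[ \log_\Delta\Big(\frac{n+1}{2}\Big)\leq \operatorname{cdim}(G). \]
   Context: All graphs are finite, simple, undirected and nonempty. For distinct vertices $v,w$, $\kappa(v,w)$ is the maximum number of internally vertex-disjoint $v$–$w$ paths (an edge $vw$ counts as one such path); $\kappa(v,v)=\infty$. For an ordered vertex set $W=(w_1,\ldots,w_k)$, $r_G(v,W)=[\kappa(v,w_1),\ldots,\kappa(v,w_k)]$. $W$ is resolving if $r_G(v_1,W)=r_G(v_2,W)$ implies $v_1=v_2$. The connectivity dimension $\operatorname{cdim}(G)$ is the minimum cardinality of a resolving set. *)

(* Defs.v *)
From mathcomp Require Import all_boot.
From mathcomp Require Import boolp.
From Stdlib Require Import Reals.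

Set Implicit Arguments.
Unset Strict Implicit.
Unset Printing Implicit Defensive.

Section Graphs.
Variable T : finType.
Variable e : rel T.

Definition simple_graph : Prop := symmetric e /\ irreflexive e.

Definition connected_graph : Prop := forall x y : T, connect e x y.

Definition deg (v : T) : nat := #|[set w | e v w]|.
Definition max_degree : nat := \max_(v : T) deg v.

Definition is_path (v w : T) (p : seq T) : bool :=
  [&& path e v p, last v p == w & uniq (v :: p)].

(* internal vertices of the path v :: p (all except the two ends) *)
Definition internal (v : T) (p : seq T) : seq T := behead (belast v p).

Definition disjoint_family (v w : T) (F : seq (seq T)) : bool :=
  [&& uniq F, all (is_path v w) F &
      pairwise (fun p q => ~~ has (mem (internal v q)) (internal v p)) F].

(* kappa v w (v <> w): maximum number of internally vertex-disjoint v–w paths.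
   Such a family has at most #|T| + 1 members (at most one path without internal
   vertices, the others have nonempty pairwise disjoint internal vertex sets), so
   the maximum over k < #|T| + 2 is the true maximum. *)
Definition kappa_fin (v w : T) : nat :=
  \max_(k < #|T|.+2 | `[< exists F, disjoint_family v w F /\ size F = k >]) k.

(* kappa with kappa(v,v) = infinity, encoded as None. *)
Definition kappa (v w : T) : option nat :=
  if v == w then None else Some (kappa_fin v w).

(* Resolving set; the representation r(v,W) is compared coordinatewise, so the
   order of W is irrelevant and W is taken as a set. *)
Definition resolving (W : {set T}) : bool :=
  [forall v1, forall v2,
     [forall w in W, kappa v1 w == kappa v2 w] ==> (v1 == v2)].

(* Connectivity dimension: minimum cardinality of a resolving set
   ([set: T] is always resolving, so #|T| is a safe initial value). *)
Definition cdim : nat := \big[minn/#|T|]_(W : {set T} | resolving W) #|W|.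

End Graphs.

(* Main.v *)
Require Import Defs.
From mathcomp Require Import all_boot.
From mathcomp Require Import boolp.

Set Implicit Arguments.
Unset Strict Implicit.
Unset Printing Implicit Defensive.

Section Aux.
Variable T : finType.
Variable e : rel T.

Lemma is_path_cons v w p : v != w -> is_path e v w p ->
  exists h p', [/\ p = h :: p', e v h, (h == w -> p' = [::]) &
                   (h != w -> h \in internal v p)].
Proof.
case: p => [|h p'] vw /and3P [pth lst un].
  by move: lst => /= /eqP lst; rewrite lst eqxx in vw.
exists h, p'; move: pth => /= /andP [evh pth]; split => //.
- move=> /eqP hw; case: p' lst un pth => [//|a q] /= /eqP lst.
  move=> /andP [_ /andP [hn _]] _.
  have: last a q \in a :: q by apply: mem_last.
  by rewrite lst -hw (negbTE hn).
- move=> hw; case: p' lst un pth => [|a q] /= /eqP lst.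
    by rewrite lst eqxx in hw.
  by move=> _ _; rewrite /internal /= inE eqxx.
Qed.

Lemma disj_size v w F : v != w -> disjoint_family e v w F -> size F <= deg e v.
Proof.
move=> vw /and3P [uF allF pw].
have [um ah] : uniq (map (head v) F) /\ all (fun p => e v (head v p)) F.
  elim: F uF allF pw => [|p F IH] //= /andP[pF uF] /andP[pp allF] /andP[allr pw].
  have [um ah] := IH uF allF pw.
  have [h [p' [ep evh hw1 hw2]]] := is_path_cons vw pp.
  rewrite ah um andbT /= ep /= evh andbT.
  split => //; apply/negP => /mapP [q qF].
  have qq : is_path e v w q by move/allP: allF; apply.
  have [h' [q' [eq' evh' hw1' hw2']]] := is_path_cons vw qq.
  rewrite eq' /= => hh; subst h'.
  case: (boolP (h == w)) => hw.
    have pq : p = q by rewrite ep eq' (hw1 hw) (hw1' hw).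
    by rewrite pq qF in pF.
  move/allP: allr => /(_ q qF) /negP; apply; apply/hasP; exists h.
    exact: hw2.
  exact: hw2'.
rewrite -(size_map (head v)) -(card_uniqP um) /deg.
apply: subset_leq_card; apply/subsetP => x /mapP [p pF ->].
by rewrite inE; move/allP: ah; apply.
Qed.

Lemma kappa_fin_le v w : v != w -> kappa_fin e v w <= deg e v.
Proof.
move=> vw; apply/bigmax_leqP => k /asboolP [F [dF <-]].
exact: disj_size dF.
Qed.

Lemma kappa_fin_ge v w : connected_graph e -> v != w -> 1 <= kappa_fin e v w.
Proof.
move=> con vw.
have lt1 : 1 < #|T|.+2 by [].
apply: (leq_trans _ (@leq_bigmax_cond _ _ (fun k : 'I_#|T|.+2 => nat_of_ord k) (Ordinal lt1) _)) => //.
apply/asboolP.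
have /connectP [p pp lp] := con v w.
rewrite lp. case: (shortenP pp) => p' pp' up' _ .
exists [:: p']; split => //.
rewrite /disjoint_family /= andbT /is_path pp' up' andbT.
by rewrite eqxx.

Qed.

Lemma resolving_setT : resolving e [set: T].
Proof.
apply/forallP => v1; apply/forallP => v2; apply/implyP => /forallP /(_ v1).
rewrite in_setT /= /kappa eqxx.
by case: (eqVneq v2 v1).

Qed.

Lemma cdim_attained : exists W, resolving e W /\ #|W| = cdim e.
Proof.
rewrite /cdim; apply: (big_ind (fun x => exists W, resolving e W /\ #|W| = x)).
- by exists [set: T]; rewrite cardsT; split => //; apply: resolving_setT.
- move=> x y [W1 [r1 c1]] [W2 [r2 c2]]; rewrite /minn.
  by case: (x < y); [exists W1 | exists W2].
- by move=> W rW; exists W.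
Qed.

Lemma count_bound d : connected_graph e -> max_degree e = d.+1 ->
  #|T| <= cdim e + d.+1 ^ cdim e.
Proof.
move=> con md.
have [W [rW cW]] := cdim_attained.
rewrite -cW.
pose g := fun v => ([ffun i : 'I_#|W| => (inord (kappa_fin e v (enum_val (A := W) i)).-1 : 'I_d.+1)] : {ffun 'I_#|W| -> 'I_d.+1}).
have inj : {in ~: W &, injective g}.
  move=> v1 v2; rewrite !inE => v1W v2W eqg.
  move/forallP: rW => /(_ v1) /forallP /(_ v2) /implyP H; apply/eqP/H.
  apply/forallP => w; apply/implyP => wW.
  have w1 : v1 != w by apply: contraNneq v1W => ->.
  have w2 : v2 != w by apply: contraNneq v2W => ->.
  rewrite /kappa (negbTE w1) (negbTE w2).
  have := congr1 (fun f : {ffun 'I_#|W| -> 'I_d.+1} => val (f (enum_rank_in wW w))) eqg.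
  rewrite /g !ffunE enum_rankK_in //.
  have b1 := kappa_fin_ge con w1; have b2 := kappa_fin_ge con w2.
  have c1 := kappa_fin_le w1; have c2 := kappa_fin_le w2.
  have dd v : deg e v <= d.+1. rewrite -md /max_degree. exact: (@leq_bigmax T (deg e) v).
  have c1' := leq_trans c1 (dd v1); have c2' := leq_trans c2 (dd v2).
  rewrite /= !inordK; try by [apply: leq_trans _ c1'; rewrite ltn_predL | apply: leq_trans _ c2'; rewrite ltn_predL].
  move=> h; apply/eqP; congr Some.
  by rewrite -(prednK b1) -(prednK b2) h.
have : #|~: W| <= d.+1 ^ #|W|.
  rewrite -(card_in_imset inj).
  apply: leq_trans (max_card _) _.
  by rewrite card_ffun card_ord card_ord.
by rewrite -(cardsC W) leq_add2l.
Qed.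

End Aux.

From Stdlib Require Import Reals Lra.

Lemma expn_pow m n : expn m n = Nat.pow m n.
Proof. elim: n => [|n IH] //; rewrite expnS IH /=; reflexivity. Qed.

Theorem mainTheorem4 (T : finType) (e : rel T) :
  simple_graph e -> connected_graph e -> (2 <= max_degree e)%N ->
  (ln ((INR #|T| + 1) / 2) / ln (INR (max_degree e)) <= INR (cdim e))%R.
Proof.
move=> _ con md.
case ed: (max_degree e) md => [|d] // md.
have cb := count_bound con ed.
set k := cdim e in cb *; set n := #|T| in cb *.
have kl : k < expn d.+1 k by apply: ltn_expl.
have nb : n.+1 <= 2 * expn d.+1 k.
  by rewrite mul2n -addnn; apply: leq_trans (_ : n.+1 <= k.+1 + expn d.+1 k) (leq_add kl (leqnn _)); rewrite addSn ltnS.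
have nbR : (INR n + 1 <= 2 * INR d.+1 ^ k)%R.
  rewrite -S_INR -pow_INR -expn_pow.
  have := le_INR _ _ (elimT leP nb).
  by rewrite mult_INR.
have dpos : (1 < INR d.+1)%R.
  have := lt_INR 1 d.+1 (elimT ltP md); by rewrite /=.
have lnpos : (0 < ln (INR d.+1))%R.
  rewrite -ln_1; apply: ln_increasing; lra.
have npos : (0 < (INR n + 1) / 2)%R.
  have := pos_INR n; lra.
have le1 : (ln ((INR n + 1) / 2) <= INR k * ln (INR d.+1))%R.
  rewrite -ln_pow; last lra.
  have ple : ((INR n + 1) / 2 <= INR d.+1 ^ k)%R by lra.
  case: (Rle_lt_or_eq_dec _ _ ple) => h.
    by apply: Rlt_le; apply: ln_increasing.
  by rewrite h; apply: Rle_refl.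
apply: (Rmult_le_reg_r (ln (INR d.+1))) => //.
rewrite /Rdiv Rmult_assoc Rinv_l; last lra.
by rewrite Rmult_1_r.
Qed.
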